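(* Fix $\delta>0$. Let (R) be the problem: maximize over $\{\mathbf Q_g\}\in\mathcal Q$ and $s\in[0,1]^{\mathcal K}$ the function $$F(\{\mathbf Q_g\},s)=\min_{g}\Big\{\frac{\sum_{k\in\mathcal K_g}s_k}{\tau_g|\mathcal K_g|}\min_{k\in\mathcal K_g}\big[r_k(\{\mathbf Q_\ell\})+\delta^{-1}(1-s_k)\big]\Big\},$$ which is equivalent to the epigraph problem: maximize $\alpha$ subject to $R_g\sum_{k\in\mathcal K_g}s_k\ge\tau_g|\mathcal K_g|\alpha^2$, $r_k(\{\mathbf Q_\ell\})+\delta^{-1}(1-s_k)\ge R_g$ for $k\in\mathcal K_g$, $0\le s_k\le1$, $\{\mathbf Q_g\}\in\mathcal Q$. Consider the iterative algorithm: start from any $\{\tilde{\mathbf Q}_\ell\}\in\mathcal Q$; at each iteration solve the convex problem maximize $\alpha$ over $\{\mathbf Q_g\},\{R_g\},\{s_k\},\alpha$ subject to $\begin{pmatrix}R_g&\alpha\sqrt{\tau_g|\mathcal K_g|}\\ \alpha\sqrt{\tau_g|\mathcal K_g|}&\sum_{k\in\mathcal K_g}s_k\end{pmatrix}\succeq\mathbf 0$ for all $g$, $\bar r_k(\{\mathbf Q_\ell\}\mid\{\tilde{\mathbf Q}_\ell\})+\delta^{-1}(1-s_k)\ge R_g$ for all $k\in\mathcal K_g$ and all $g$, $0\le s_k\le 1$, $\{\mathbf Q_g\}\in\mathcal Q$; then set $\tilde{\mathbf Q}_\ell$ equal to the obtained $\mathbf Q_\ell$ and repeat. Then every limit point of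 the sequence of iterates $(\{\mathbf Q_g\},\{s_k\})$ (together with the corresponding $\{R_g\},\alpha$) generated by this algorithm is a stationary point of (R).
   Context: Setting and notation as follows. $B$ BSs with $M$ antennas, powers $P_b\ge0$; users $\mathcal K$ partitioned into groups $\mathcal K_1,\dots,\mathcal K_G$; $\mathcal B_g$ the BSs serving group $g$; weights $\tau_g>0$; channels $\mathbf h_{b,k}\in\mathbb C^M$, $\mathbf h_k=[\mathbf h_{1,k}^H,\dots,\mathbf h_{B,k}^H]^H$; $\{\mathbf Q\}_{b,b'}$ the $(b,b')$-th $M\times M$ block. $\mathcal Q$: tuples of Hermitian PSD $MB\times MB$ matrices $(\mathbf Q_1,\dots,\mathbf Q_G)$ with $\sum_g\mathrm{tr}(\{\mathbf Q_g\}_{b,b})\le P_b$ for all $b$ and $\{\mathbf Q_g\}_{b,b'}=\mathbf 0$ if $b\notin\mathcal B_g$ or $b'\notin\mathcal B_g$. For $k\in\mathcal K_g$, $r_k(\{\mathbf Q_\ell\})=\log_2\big(1+\frac{\mathrm{tr}(\mathbf Q_g\mathbf h_k\mathbf h_k^H)}{\sum_{\ell\neq g}\mathrm{tr}(\mathbf Q_\ell\mathbf h_k\mathbf h_k^H)+1}\big)$ and $\bar r_k(\{\mathbf Q_\ell\}\mid\{\tilde{\mathbf Q}_\ell\})=\log_2\big(1+\sum_{\ell=1}^G\mathrm{tr}(\mathbf Q_\ell\mathbf h_k\mathbf h_k^H)\big)-\log_2\big(1+\sum_{\ell\ne g}\mathrm{tr}(\tilde{\mathbf Q}_\ell\mathbf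 h_k\mathbf h_k^H)\big)-\frac{\sum_{\ell\ne g}\mathrm{tr}((\mathbf Q_\ell-\tilde{\mathbf Q}_\ell)\mathbf h_k\mathbf h_k^H)}{[1+\sum_{\ell\ne g}\mathrm{tr}(\tilde{\mathbf Q}_\ell\mathbf h_k\mathbf h_k^H)]\ln 2}$. A stationary point of a maximization problem over a convex feasible set is a feasible point at which the directional derivative of the objective along every feasible direction is nonpositive. *)

(* Defs.v *)
From Stdlib Require Import Reals List Arith.
Open Scope R_scope.

Definition Cpx := (R * R)%type.
Definition C0 : Cpx := (0, 0).
Definition Cadd (a b : Cpx) : Cpx := (fst a + fst b, snd a + snd b).
Definition Cmul (a b : Cpx) : Cpx :=
  (fst a * fst b - snd a * snd b, fst a * snd b + snd a * fst b).
Definition Cconj (a : Cpx) : Cpx := (fst a, - snd a).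
Definition Cscal (t : R) (a : Cpx) : Cpx := (t * fst a, t * snd a).

Fixpoint sumR (n : nat) (f : nat -> R) : R :=
  match n with O => 0 | S m => sumR m f + f m end.
Fixpoint sumC (n : nat) (f : nat -> Cpx) : Cpx :=
  match n with O => C0 | S m => Cadd (sumC m f) (f m) end.

Definition Mat := nat -> nat -> Cpx.

Definition hermitian (N : nat) (A : Mat) : Prop :=
  forall i j, (i < N)%nat -> (j < N)%nat -> A i j = Cconj (A j i).

Definition quad (N : nat) (A : Mat) (v : nat -> Cpx) : Cpx :=
  sumC N (fun i => sumC N (fun j => Cmul (Cmul (Cconj (v i)) (A i j)) (v j))).

Definition hpsd (N : nat) (A : Mat) : Prop :=
  hermitian N A /\ forall v : nat -> Cpx, 0 <= fst (quad N A v).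

(* trace of the (b,b)-th M x M diagonal block; global index of antenna m of
   BS b is b*M+m, so the block {Q}_{b,b'} has rows b*M.. and cols b'*M.. *)
Definition blocktr (M : nat) (A : Mat) (b : nat) : R :=
  sumR M (fun m => fst (A (b * M + m)%nat (b * M + m)%nat)).

Definition MatTuple := nat -> Mat.

(* the feasible set \mathcal Q ; serv g b = true iff b \in B_g *)
Definition Qfeas (B M G : nat) (serv : nat -> nat -> bool) (P : nat -> R)
    (Q : MatTuple) : Prop :=
  (forall g, (g < G)%nat -> hpsd (M * B) (Q g)) /\
  (forall b, (b < B)%nat -> sumR G (fun g => blocktr M (Q g) b) <= P b) /\
  (forall g i j, (g < G)%nat -> (i < M * B)%nat -> (j < M * B)%nat ->
     (serv g (i / M)%nat = false \/ serv g (j / M)%nat = false) ->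
     Q g i j = C0).

(* tr(Q_l h_k h_k^H) = h_k^H Q_l h_k  (h k : stacked channel of user k) *)
Definition trQhh (B M : nat) (h : nat -> nat -> Cpx) (Q : MatTuple) (l k : nat) : R :=
  fst (quad (M * B) (Q l) (h k)).

Definition log2 (x : R) : R := ln x / ln 2.

Definition interf (B M G : nat) (grp : nat -> nat) (h : nat -> nat -> Cpx)
    (Q : MatTuple) (k : nat) : R :=
  sumR G (fun l => if Nat.eqb l (grp k) then 0 else trQhh B M h Q l k).

Definition rate (B M G : nat) (grp : nat -> nat) (h : nat -> nat -> Cpx)
    (Q : MatTuple) (k : nat) : R :=
  log2 (1 + trQhh B M h Q (grp k) k / (interf B M G grp h Q k + 1)).

Definition rbar (B M G : nat) (grp : nat -> nat) (h : nat -> nat -> Cpx)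
    (Q Qt : MatTuple) (k : nat) : R :=
  log2 (1 + sumR G (fun l => trQhh B M h Q l k))
  - log2 (1 + interf B M G grp h Qt k)
  - sumR G (fun l => if Nat.eqb l (grp k) then 0
                     else trQhh B M h Q l k - trQhh B M h Qt l k)
    / ((1 + interf B M G grp h Qt k) * ln 2).

Definition members (K : nat) (grp : nat -> nat) (g : nat) : list nat :=
  filter (fun k => Nat.eqb (grp k) g) (seq 0 K).

Definition lsum (f : nat -> R) (l : list nat) : R :=
  fold_right (fun k acc => f k + acc) 0 l.

(* minimum over a nonempty list (value 0 on the empty list, never used) *)
Fixpoint lmin (f : nat -> R) (l : list nat) : R :=
  match l with
  | nil => 0
  | x :: nil => f x
  | x :: t => Rmin (f x) (lmin f t)
  end.

Definition Fobj (B M K G : nat) (grp : nat -> nat) (h : nat -> nat -> Cpx)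
    (tau : nat -> R) (delta : R) (Q : MatTuple) (s : nat -> R) : R :=
  lmin (fun g =>
          (lsum s (members K grp g) / (tau g * INR (length (members K grp g))))
          * lmin (fun k => rate B M G grp h Q k + / delta * (1 - s k))
                 (members K grp g))
       (seq 0 G).

Definition Rfeas (B M K G : nat) (serv : nat -> nat -> bool) (P : nat -> R)
    (Q : MatTuple) (s : nat -> R) : Prop :=
  Qfeas B M G serv P Q /\ (forall k, (k < K)%nat -> 0 <= s k <= 1).

Definition psd2 (a b c : R) : Prop :=
  forall x y : R, 0 <= x * (a * x + b * y) + y * (b * x + c * y).

Definition subfeas (B M K G : nat) (grp : nat -> nat) (serv : nat -> nat -> bool)
    (P : nat -> R) (h : nat -> nat -> Cpx) (tau : nat -> R) (delta : R)
    (Qt Q : MatTuple) (Rg : nat -> R) (s : nat -> R) (al : R) : Prop :=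
  Qfeas B M G serv P Q /\
  (forall k, (k < K)%nat -> 0 <= s k <= 1) /\
  (forall g, (g < G)%nat ->
     psd2 (Rg g) (al * sqrt (tau g * INR (length (members K grp g))))
          (lsum s (members K grp g))) /\
  (forall g k, (g < G)%nat -> In k (members K grp g) ->
     rbar B M G grp h Q Qt k + / delta * (1 - s k) >= Rg g).

Definition subopt (B M K G : nat) (grp : nat -> nat) (serv : nat -> nat -> bool)
    (P : nat -> R) (h : nat -> nat -> Cpx) (tau : nat -> R) (delta : R)
    (Qt Q : MatTuple) (Rg : nat -> R) (s : nat -> R) (al : R) : Prop :=
  subfeas B M K G grp serv P h tau delta Qt Q Rg s al /\
  forall Q' Rg' s' al',
    subfeas B M K G grp serv P h tau delta Qt Q' Rg' s' al' -> al' <= al.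

Definition Qstep (Q D : MatTuple) (t : R) : MatTuple :=
  fun g i j => Cadd (Q g i j) (Cscal t (D g i j)).
Definition sstep (s ds : nat -> R) (t : R) : nat -> R := fun k => s k + t * ds k.

(* stationary point of (R): feasible, and along every feasible direction the
   (one-sided) directional derivative of F exists and is nonpositive *)
Definition stationaryR (B M K G : nat) (grp : nat -> nat) (serv : nat -> nat -> bool)
    (P : nat -> R) (h : nat -> nat -> Cpx) (tau : nat -> R) (delta : R)
    (Q : MatTuple) (s : nat -> R) : Prop :=
  Rfeas B M K G serv P Q s /\
  forall (D : MatTuple) (ds : nat -> R),
    (exists t0, 0 < t0 /\ forall t, 0 < t <= t0 ->
        Rfeas B M K G serv P (Qstep Q D t) (sstep s ds t)) ->
    exists L, L <= 0 /\
      forall eps, 0 < eps -> exists eta, 0 < eta /\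
        forall t, 0 < t < eta ->
          Rabs ((Fobj B M K G grp h tau delta (Qstep Q D t) (sstep s ds t)
                 - Fobj B M K G grp h tau delta Q s) / t - L) < eps.

(* Main.v *)
Require Import Defs.
From Stdlib Require Import Reals List Arith.
From Stdlib Require Import Lra Lia Psatz.
Open Scope R_scope.

Lemma sumR_ext n f g : (forall i, (i < n)%nat -> f i = g i) -> sumR n f = sumR n g.
Proof. induction n; simpl; intros H; auto. rewrite IHn by (intros; apply H; lia). rewrite H by lia. auto. Qed.

Lemma sumR_lin n f g t : sumR n (fun i => f i + t * g i) = sumR n f + t * sumR n g.
Proof. induction n; simpl. ring. rewrite IHn. ring. Qed.

Lemma sumR_plus n f g : sumR n (fun i => f i + g i) = sumR n f + sumR n g.
Proof. induction n; simpl. ring. rewrite IHn. ring. Qed.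

Lemma sumR_nonneg n f : (forall i, (i < n)%nat -> 0 <= f i) -> 0 <= sumR n f.
Proof. induction n; simpl; intros H. lra. assert (0 <= f n) by (apply H; lia).
 assert (0 <= sumR n f) by (apply IHn; intros; apply H; lia). lra. Qed.

Lemma fst_sumC n f : fst (sumC n f) = sumR n (fun i => fst (f i)).
Proof. induction n; simpl; auto. rewrite IHn. auto. Qed.

Definition cr (v : nat -> Cpx) i j := fst (v i) * fst (v j) + snd (v i) * snd (v j).
Definition ci (v : nat -> Cpx) i j := snd (v i) * fst (v j) - fst (v i) * snd (v j).

Lemma quad_fst N A v : fst (quad N A v) =
  sumR N (fun i => sumR N (fun j => fst (A i j) * cr v i j + snd (A i j) * ci v i j)).
Proof. unfold quad. rewrite fst_sumC. apply sumR_ext; intros. rewrite fst_sumC.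
 apply sumR_ext; intros. unfold cr, ci, Cmul, Cconj; simpl. ring. Qed.

Lemma trQhh_step B M h Q D t l k :
  trQhh B M h (Qstep Q D t) l k = trQhh B M h Q l k + t * trQhh B M h D l k.
Proof. unfold trQhh. rewrite !quad_fst. rewrite <- sumR_lin. apply sumR_ext; intros.
 rewrite <- sumR_lin. apply sumR_ext; intros. unfold Qstep, Cadd, Cscal; simpl. ring. Qed.

Lemma interf_step B M G grp h Q D t k :
  interf B M G grp h (Qstep Q D t) k = interf B M G grp h Q k + t * interf B M G grp h D k.
Proof. unfold interf. rewrite <- sumR_lin. apply sumR_ext; intros.
 destruct (Nat.eqb i (grp k)). ring. apply trQhh_step. Qed.

Lemma sumtr_step B M G h Q D t k :
  sumR G (fun l => trQhh B M h (Qstep Q D t) l k) =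
  sumR G (fun l => trQhh B M h Q l k) + t * sumR G (fun l => trQhh B M h D l k).
Proof. rewrite <- sumR_lin. apply sumR_ext; intros. apply trQhh_step. Qed.

Lemma lsum_sstep s ds t l : lsum (sstep s ds t) l = lsum s l + t * lsum ds l.
Proof. induction l; simpl. ring. rewrite IHl. unfold sstep. ring. Qed.

Lemma sumR_split n f g : sumR n f = (if Nat.ltb g n then f g else 0) +
   sumR n (fun l => if Nat.eqb l g then 0 else f l).
Proof. induction n; simpl. lra. rewrite IHn.
 destruct (Nat.eqb n g) eqn:E.
 - apply Nat.eqb_eq in E; subst. replace (Nat.ltb g g) with false by (symmetry; apply Nat.ltb_irrefl).
   replace (Nat.ltb g (S g)) with true by (symmetry; apply Nat.ltb_lt; lia). ring.
 - apply Nat.eqb_neq in E. destruct (Nat.ltb g n) eqn:E1.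
   + apply Nat.ltb_lt in E1. replace (Nat.ltb g (S n)) with true by (symmetry; apply Nat.ltb_lt; lia). ring.
   + apply Nat.ltb_ge in E1. replace (Nat.ltb g (S n)) with false by (symmetry; apply Nat.ltb_ge; lia). ring.
Qed.

Lemma sum_split_interf B M G grp h Q k : (grp k < G)%nat ->
  sumR G (fun l => trQhh B M h Q l k) = trQhh B M h Q (grp k) k + interf B M G grp h Q k.
Proof. intros H. rewrite (sumR_split _ _ (grp k)). replace (Nat.ltb (grp k) G) with true
  by (symmetry; apply Nat.ltb_lt; auto). auto. Qed.

Lemma sumR_minus n f g : sumR n (fun i => f i - g i) = sumR n f - sumR n g.
Proof. induction n; simpl. ring. rewrite IHn. ring. Qed.

Lemma ln2_pos : 0 < ln 2.
Proof. pose proof ln_lt_2. lra. Qed.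

Lemma ln_le_sub1 x : 0 < x -> ln x <= x - 1.
Proof. intros. pose proof (exp_ineq1_le (ln x)). rewrite exp_ln in H0; lra. Qed.

Lemma ln_div' x y : 0 < x -> 0 < y -> ln (x / y) = ln x - ln y.
Proof. intros. unfold Rdiv. assert (0 < / y) by (apply Rinv_0_lt_compat; auto).
 rewrite ln_mult by auto. rewrite ln_Rinv by auto. ring. Qed.

Lemma trQhh_nonneg B M G serv P h Q l k : Qfeas B M G serv P Q -> (l < G)%nat ->
  0 <= trQhh B M h Q l k.
Proof. intros [H _] Hl. apply (H l Hl). Qed.

Lemma interf_nonneg B M G grp serv P h Q k : Qfeas B M G serv P Q ->
  0 <= interf B M G grp h Q k.
Proof. intros HQ. unfold interf. apply sumR_nonneg. intros. destruct (Nat.eqb i (grp k)).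
 lra. eapply trQhh_nonneg; eauto. Qed.

Lemma rate_eq B M G grp h Q k : (grp k < G)%nat ->
  0 <= trQhh B M h Q (grp k) k -> 0 <= interf B M G grp h Q k ->
  rate B M G grp h Q k = log2 (1 + sumR G (fun l => trQhh B M h Q l k))
                          - log2 (1 + interf B M G grp h Q k).
Proof. intros Hg H1 H2. rewrite (sum_split_interf B M G grp h Q k Hg). unfold rate, log2.
 set (T := trQhh B M h Q (grp k) k) in *. set (I := interf B M G grp h Q k) in *.
 replace (1 + T / (I + 1)) with ((1 + (T + I)) / (1 + I)) by (field; lra).
 rewrite ln_div' by lra. field. apply Rgt_not_eq, ln2_pos. Qed.

Lemma rbar_eq B M G grp h Q Qt k :
  rbar B M G grp h Q Qt k = log2 (1 + sumR G (fun l => trQhh B M h Q l k))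
     - log2 (1 + interf B M G grp h Qt k)
     - (interf B M G grp h Q k - interf B M G grp h Qt k) /
       ((1 + interf B M G grp h Qt k) * ln 2).
Proof. unfold rbar. f_equal. f_equal. unfold interf. rewrite <- sumR_minus.
 apply sumR_ext. intros. destruct (Nat.eqb i (grp k)); ring. Qed.

Lemma rbar_le_rate B M G grp serv P h Q Qt k : (grp k < G)%nat ->
  Qfeas B M G serv P Q -> Qfeas B M G serv P Qt ->
  rbar B M G grp h Q Qt k <= rate B M G grp h Q k.
Proof. intros Hg HQ HQt. rewrite rbar_eq. rewrite rate_eq; auto.
 2: eapply trQhh_nonneg; eauto. 2: eapply interf_nonneg; eauto.
 pose proof (interf_nonneg B M G grp serv P h Q k HQ).
 pose proof (interf_nonneg B M G grp serv P h Qt k HQt).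
 set (I := interf B M G grp h Q k) in *. set (It := interf B M G grp h Qt k) in *.
 unfold log2. pose proof ln2_pos.
 pose proof (ln_le_sub1 ((1 + I) / (1 + It))). rewrite ln_div' in H2 by lra.
 assert ((ln (1 + I) - ln (1 + It)) / ln 2 <= (I - It) / ((1 + It) * ln 2)).
 { replace ((I - It) / ((1 + It) * ln 2)) with (((1 + I) / (1 + It) - 1) / ln 2) by (field; lra).
   apply Rmult_le_compat_r. left; apply Rinv_0_lt_compat; lra. apply H2.
   apply Rdiv_lt_0_compat; lra. }
 unfold Rdiv in *. lra. Qed.

Lemma rbar_self B M G grp serv P h Q k : (grp k < G)%nat -> Qfeas B M G serv P Q ->
  rbar B M G grp h Q Q k = rate B M G grp h Q k.
Proof. intros Hg HQ. rewrite rbar_eq, rate_eq; auto.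
 2: eapply trQhh_nonneg; eauto. 2: eapply interf_nonneg; eauto.
 pose proof (interf_nonneg B M G grp serv P h Q k HQ). pose proof ln2_pos.
 replace (interf B M G grp h Q k - interf B M G grp h Q k) with 0 by ring.
 unfold Rdiv. rewrite Rmult_0_l. ring. Qed.

Lemma lmin_le_mem f l x : In x l -> lmin f l <= f x.
Proof. induction l as [|a l IH]; simpl. tauto. intros [H|H].
 - subst. destruct l. lra. apply Rmin_l.
 - destruct l. destruct H. specialize (IH H). eapply Rle_trans. apply Rmin_r. auto. Qed.

Lemma lmin_ge f l c : l <> nil -> (forall x, In x l -> c <= f x) -> c <= lmin f l.
Proof. induction l as [|a l IH]; simpl. tauto. intros _ H. destruct l.
 apply H; auto. apply Rmin_glb. apply H; auto. apply IH. discriminate. intros; apply H; auto. Qed.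

Lemma lmin_mono f g l : (forall x, In x l -> f x <= g x) -> lmin f l <= lmin g l.
Proof. induction l as [|a l IH]; simpl. lra. intros H. destruct l. apply H; auto.
 apply Rmin_glb. eapply Rle_trans. apply Rmin_l. apply H; auto.
 eapply Rle_trans. apply Rmin_r. apply IH. intros; apply H; auto. Qed.

Lemma lmin_ext f g l : (forall x, In x l -> f x = g x) -> lmin f l = lmin g l.
Proof. intros. apply Rle_antisym; apply lmin_mono; intros; rewrite H; auto; lra. Qed.

Lemma lsum_nonneg s l : (forall x, In x l -> 0 <= s x) -> 0 <= lsum s l.
Proof. induction l; simpl; intros. lra. assert (0 <= s a) by auto.
 assert (0 <= lsum s l) by auto. lra. Qed.

Lemma members_In K grp g k : In k (members K grp g) <-> (k < K)%nat /\ grp k = g.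
Proof. unfold members. rewrite filter_In, in_seq, Nat.eqb_eq. split; intros; lia. Qed.

Lemma members_ne K G grp g : (forall g, (g < G)%nat -> exists k, (k < K)%nat /\ grp k = g) ->
  (g < G)%nat -> members K grp g <> nil.
Proof. intros H Hg E. destruct (H g Hg) as [k Hk]. apply (members_In K grp g k) in Hk.
 rewrite E in Hk. destruct Hk. Qed.

Lemma psd2_det a b c : psd2 a b c -> 0 <= a /\ 0 <= c /\ b * b <= a * c.
Proof. intros H. pose proof (H 1 0). pose proof (H 0 1).
 pose proof (H b (-a)). pose proof (H 1 (-b)). split. nra. split. nra.
 destruct (Rle_lt_dec a 0). assert (a = 0) by nra. subst.
 destruct (Req_dec b 0). subst; nra.
 pose proof (H (-(c+1)/b) 1). unfold Rdiv in H5.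
 replace ((- (c + 1) * / b * (0 * (- (c + 1) * / b) + b * 1) + 1 * (b * (- (c + 1) * / b) + c * 1)))
  with (-c - 2) in H5 by (field; auto). nra. nra. Qed.

Lemma psd2_intro a b c : 0 < a -> b * b <= a * c -> psd2 a b c.
Proof. intros Ha Hb x y.
 assert (0 <= a * (x * (a * x + b * y) + y * (b * x + c * y))).
 { replace (a * (x * (a * x + b * y) + y * (b * x + c * y))) with
     ((a*x + b*y)*(a*x+b*y) + (a*c - b*b)*(y*y)) by ring.
   pose proof (Rle_0_sqr (a*x+b*y)). pose proof (Rle_0_sqr y). unfold Rsqr in *.
   assert (0 <= (a*c - b*b)*(y*y)) by (apply Rmult_le_pos; lra). lra. }
 set (q := x * (a * x + b * y) + y * (b * x + c * y)) in *.
 destruct (Rle_lt_dec 0 q). auto. assert (a * q < 0) by (apply Rmult_pos_neg; auto). lra. Qed.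

Definition Ftil B M K G grp h tau delta (Qt Q : MatTuple) (s : nat -> R) :=
  lmin (fun g => (lsum s (members K grp g) / (tau g * INR (length (members K grp g))))
     * lmin (fun k => rbar B M G grp h Q Qt k + / delta * (1 - s k)) (members K grp g))
   (seq 0 G).

Lemma seq_ne G : (0 < G)%nat -> seq 0 G <> nil.
Proof. destruct G. lia. simpl. discriminate. Qed.

Lemma cpos K G grp tau g : (forall g, (g < G)%nat -> 0 < tau g) ->
  (forall g, (g < G)%nat -> exists k, (k < K)%nat /\ grp k = g) -> (g < G)%nat ->
  0 < tau g * INR (length (members K grp g)).
Proof. intros Ht Hn Hg. apply Rmult_lt_0_compat; auto. apply lt_0_INR.
 pose proof (members_ne K G grp g Hn Hg). destruct (members K grp g). tauto. simpl; lia. Qed.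

Lemma lsum_s_nonneg K grp s g : (forall k, (k < K)%nat -> 0 <= s k <= 1) ->
  0 <= lsum s (members K grp g).
Proof. intros H. apply lsum_nonneg. intros. apply members_In in H0. apply H; tauto. Qed.

Lemma subfeas_lb B M K G grp serv P h tau delta Qt Q Rg s al
  (Htau : forall g, (g < G)%nat -> 0 < tau g) (HG : (0 < G)%nat)
  (Hnonempty : forall g, (g < G)%nat -> exists k, (k < K)%nat /\ grp k = g) :
  subfeas B M K G grp serv P h tau delta Qt Q Rg s al ->
  al * al <= Ftil B M K G grp h tau delta Qt Q s.
Proof. intros (HQ & Hs & Hpsd & Hr). unfold Ftil. apply lmin_ge. apply seq_ne; auto.
 intros g Hg. apply in_seq in Hg. assert (g < G)%nat by lia. clear Hg.
 pose proof (cpos K G grp tau g Htau Hnonempty H) as Hc.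
 set (c := tau g * INR (length (members K grp g))) in *.
 pose proof (lsum_s_nonneg K grp s g Hs). set (S := lsum s (members K grp g)) in *.
 destruct (psd2_det _ _ _ (Hpsd g H)) as (H1 & H2 & H3). fold c S in H3.
 replace (al * sqrt c * (al * sqrt c)) with (al * al * (sqrt c * sqrt c)) in H3 by ring.
 rewrite sqrt_sqrt in H3 by lra.
 assert (Rg g <= lmin (fun k => rbar B M G grp h Q Qt k + / delta * (1 - s k)) (members K grp g)).
 { apply lmin_ge. apply members_ne with G; auto. intros. apply Rge_le. apply Hr; auto. }
 set (L := lmin _ _) in *.
 assert (S / c * Rg g <= S / c * L). { apply Rmult_le_compat_l; auto. unfold Rdiv; apply Rmult_le_pos; [lra | left; apply Rinv_0_lt_compat; lra]. }
 assert (al * al <= S / c * Rg g). { unfold Rdiv. apply (Rmult_le_reg_r c); auto.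
   replace (S * / c * Rg g * c) with (Rg g * S) by (field; lra). lra. }
 lra. Qed.

Lemma subopt_ub B M K G grp serv P h tau delta Qt Q1 R1 s1 al1 Q s
  (Htau : forall g, (g < G)%nat -> 0 < tau g) (HG : (0 < G)%nat)
  (Hnonempty : forall g, (g < G)%nat -> exists k, (k < K)%nat /\ grp k = g) :
  subopt B M K G grp serv P h tau delta Qt Q1 R1 s1 al1 ->
  Rfeas B M K G serv P Q s ->
  Ftil B M K G grp h tau delta Qt Q s <= al1 * al1.
Proof. intros [Hf1 Hopt] [HQ Hs].
 destruct (Rle_lt_dec (Ftil B M K G grp h tau delta Qt Q s) 0) as [Hn|Hp].
 { pose proof (Rle_0_sqr al1). unfold Rsqr in *. lra. }
 set (F := Ftil B M K G grp h tau delta Qt Q s) in *.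
 set (Rg := fun g => lmin (fun k => rbar B M G grp h Q Qt k + / delta * (1 - s k)) (members K grp g)).
 assert (Hsub : subfeas B M K G grp serv P h tau delta Qt Q Rg s (sqrt F)).
 { split; [auto|split; [auto|split]].
   - intros g Hg. pose proof (cpos K G grp tau g Htau Hnonempty Hg) as Hc.
     set (c := tau g * INR (length (members K grp g))) in *.
     pose proof (lsum_s_nonneg K grp s g Hs). set (S := lsum s (members K grp g)) in *.
     assert (HT : F <= S / c * Rg g).
     { unfold F, Ftil. apply (lmin_le_mem (fun g => _)). apply in_seq. lia. }
     assert (HRg : 0 < Rg g).
     { destruct (Rle_lt_dec (Rg g) 0); auto.
       assert (S / c * Rg g <= 0). { assert (0 <= S / c) by (unfold Rdiv; apply Rmult_le_pos; [lra | left; apply Rinv_0_lt_compat; lra]).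
         nra. }
       lra. }
     apply psd2_intro; auto.
     replace (sqrt F * sqrt c * (sqrt F * sqrt c)) with ((sqrt F * sqrt F) * (sqrt c * sqrt c)) by ring.
     rewrite !sqrt_sqrt by lra.
     assert (F * c <= S / c * Rg g * c) by (apply Rmult_le_compat_r; lra).
     replace (S / c * Rg g * c) with (Rg g * S) in H0 by (field; lra). lra.
   - intros g k Hg Hk. apply Rle_ge. unfold Rg. apply (lmin_le_mem (fun k => _)). auto. }
 apply Hopt in Hsub. pose proof (sqrt_pos F).
 replace F with (sqrt F * sqrt F) by (apply sqrt_sqrt; lra). nra.
Qed.

Lemma Ftil_le_F B M K G grp serv P h tau delta Qt Q s
  (Htau : forall g, (g < G)%nat -> 0 < tau g)
  (Hgrp : forall k, (k < K)%nat -> (grp k < G)%nat)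
  (Hnonempty : forall g, (g < G)%nat -> exists k, (k < K)%nat /\ grp k = g) :
  Rfeas B M K G serv P Q s -> Qfeas B M G serv P Qt ->
  Ftil B M K G grp h tau delta Qt Q s <= Fobj B M K G grp h tau delta Q s.
Proof. intros [HQ Hs] HQt. unfold Ftil, Fobj. apply lmin_mono. intros g Hg.
 apply in_seq in Hg. assert (g < G)%nat by lia.
 pose proof (cpos K G grp tau g Htau Hnonempty H) as Hc.
 pose proof (lsum_s_nonneg K grp s g Hs).
 apply Rmult_le_compat_l. unfold Rdiv; apply Rmult_le_pos; [lra | left; apply Rinv_0_lt_compat; lra].
 apply lmin_mono. intros k Hk. apply members_In in Hk.
 apply Rplus_le_compat_r. eapply rbar_le_rate; eauto. apply Hgrp; tauto. Qed.

Lemma Ftil_self B M K G grp serv P h tau delta Q s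
  (Hgrp : forall k, (k < K)%nat -> (grp k < G)%nat) :
  Rfeas B M K G serv P Q s ->
  Ftil B M K G grp h tau delta Q Q s = Fobj B M K G grp h tau delta Q s.
Proof. intros [HQ Hs]. unfold Ftil, Fobj. apply lmin_ext. intros g Hg. f_equal.
 apply lmin_ext. intros k Hk. apply members_In in Hk. f_equal.
 eapply rbar_self; eauto. apply Hgrp; tauto. Qed.

Lemma cv_const c : Un_cv (fun _ => c) c.
Proof. intros e He. exists O. intros. unfold R_dist. rewrite Rminus_diag, Rabs_R0. auto. Qed.

Lemma cv_ext u v l : (forall n, u n = v n) -> Un_cv u l -> Un_cv v l.
Proof. intros H C e He. destruct (C e He) as [N HN]. exists N. intros. rewrite <- H. auto. Qed.

Lemma cv_sumR n (f : nat -> nat -> R) l :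
  (forall i, (i < n)%nat -> Un_cv (fun m => f m i) (l i)) ->
  Un_cv (fun m => sumR n (f m)) (sumR n l).
Proof. induction n; simpl; intros H. apply cv_const.
 apply CV_plus. apply IHn; intros; apply H; lia. apply H; lia. Qed.

Lemma cv_scal u l c : Un_cv u l -> Un_cv (fun n => u n * c) (l * c).
Proof. intros. apply CV_mult; auto. apply cv_const. Qed.

Lemma cv_le u l c : Un_cv u l -> (forall n, u n <= c) -> l <= c.
Proof. intros C H. destruct (Rle_lt_dec l c); auto. destruct (C (l - c)) as [N HN]. lra.
 specialize (HN N (le_n _)). specialize (H N). unfold R_dist in HN.
 apply Rabs_def2 in HN. lra. Qed.

Lemma cv_ge u l c : Un_cv u l -> (forall n, c <= u n) -> c <= l.
Proof. intros C H. destruct (Rle_lt_dec c l); auto. destruct (C (c - l)) as [N HN]. lra.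
 specialize (HN N (le_n _)). specialize (H N). unfold R_dist in HN.
 apply Rabs_def2 in HN. lra. Qed.

Lemma cv_eqc u l c : Un_cv u l -> (forall n, u n = c) -> l = c.
Proof. intros C H. apply Rle_antisym. apply (cv_le u l c C); intros; rewrite H; lra.
 apply (cv_ge u l c C); intros; rewrite H; lra. Qed.

Lemma cv_ln u l : Un_cv u l -> 0 < l -> Un_cv (fun n => ln (u n)) (ln l).
Proof. intros C H. apply continuity_seq; auto. apply derivable_continuous_pt.
 exists (/ l). apply derivable_pt_lim_ln; auto. Qed.

Lemma cv_inv u l : Un_cv u l -> l <> 0 -> Un_cv (fun n => / u n) (/ l).
Proof. intros C H. change (Un_cv (fun n => inv_fct id (u n)) (inv_fct id l)).
 apply continuity_seq; auto. apply continuity_pt_inv; auto. apply derivable_continuous_pt.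
 exists 1. apply derivable_pt_lim_id. Qed.

Lemma cv_div u v l m : Un_cv u l -> Un_cv v m -> m <> 0 -> Un_cv (fun n => u n / v n) (l / m).
Proof. intros. unfold Rdiv. apply CV_mult; auto. apply cv_inv; auto. Qed.

Lemma cv_abs u l : Un_cv u l -> Un_cv (fun n => Rabs (u n)) (Rabs l).
Proof. intros. apply continuity_seq; auto. apply Rcontinuity_abs. Qed.

Lemma Rmin_abs a b : Rmin a b = (a + b - Rabs (a - b)) / 2.
Proof. unfold Rmin. destruct (Rle_dec a b).
 rewrite Rabs_left1 by lra. field. rewrite Rabs_right by lra. field. Qed.

Lemma cv_min u v l m : Un_cv u l -> Un_cv v m -> Un_cv (fun n => Rmin (u n) (v n)) (Rmin l m).
Proof. intros. rewrite Rmin_abs. apply (cv_ext (fun n => (u n + v n - Rabs (u n - v n)) / 2)).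
 intros; rewrite Rmin_abs; auto. unfold Rdiv. apply cv_scal. apply CV_minus.
 apply CV_plus; auto. apply cv_abs. apply CV_minus; auto. Qed.

Lemma cv_lmin (f : nat -> nat -> R) g l :
  (forall x, In x l -> Un_cv (fun n => f n x) (g x)) ->
  Un_cv (fun n => lmin (f n) l) (lmin g l).
Proof. induction l as [|a l IH]; simpl; intros H. apply cv_const.
 destruct l. apply H; auto. apply cv_min. apply H; auto. apply IH. intros; apply H; simpl; auto. Qed.

Lemma cv_lsum (f : nat -> nat -> R) g l :
  (forall x, In x l -> Un_cv (fun n => f n x) (g x)) ->
  Un_cv (fun n => lsum (f n) l) (lsum g l).
Proof. induction l as [|a l IH]; simpl; intros H. apply cv_const.
 apply CV_plus. apply H; auto. apply IH; intros; apply H; auto. Qed.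

Lemma cv_quad N (A : nat -> Mat) As v :
  (forall i j, (i < N)%nat -> (j < N)%nat ->
     Un_cv (fun n => fst (A n i j)) (fst (As i j)) /\ Un_cv (fun n => snd (A n i j)) (snd (As i j))) ->
  Un_cv (fun n => fst (quad N (A n) v)) (fst (quad N As v)).
Proof. intros H. rewrite quad_fst. apply (cv_ext (fun n => sumR N (fun i => sumR N
   (fun j => fst (A n i j) * cr v i j + snd (A n i j) * ci v i j)))).
 intros; rewrite quad_fst; auto.
 apply cv_sumR. intros i Hi. apply cv_sumR. intros j Hj. destruct (H i j Hi Hj).
 apply CV_plus; apply cv_scal; auto. Qed.

Definition ECv (MB G : nat) (Qn : nat -> MatTuple) (Qs : MatTuple) := forall g i j,
  (g < G)%nat -> (i < MB)%nat -> (j < MB)%nat ->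
  Un_cv (fun n => fst (Qn n g i j)) (fst (Qs g i j)) /\
  Un_cv (fun n => snd (Qn n g i j)) (snd (Qs g i j)).

Lemma cv_trQhh B M G h Qn Qs l k : ECv (M * B) G Qn Qs -> (l < G)%nat ->
  Un_cv (fun n => trQhh B M h (Qn n) l k) (trQhh B M h Qs l k).
Proof. intros H Hl. unfold trQhh. apply (cv_quad _ (fun n => Qn n l)). intros; apply H; auto. Qed.

Lemma cv_interf B M G grp h Qn Qs k : ECv (M * B) G Qn Qs ->
  Un_cv (fun n => interf B M G grp h (Qn n) k) (interf B M G grp h Qs k).
Proof. intros H. unfold interf. apply (cv_sumR G (fun n l => if Nat.eqb l (grp k) then 0 else trQhh B M h (Qn n) l k)).
 intros i Hi. destruct (Nat.eqb i (grp k)). apply cv_const. apply (cv_trQhh B M G); auto. Qed.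

Lemma cv_sumtr B M G h Qn Qs k : ECv (M * B) G Qn Qs ->
  Un_cv (fun n => sumR G (fun l => trQhh B M h (Qn n) l k)) (sumR G (fun l => trQhh B M h Qs l k)).
Proof. intros H. apply (cv_sumR G (fun n l => trQhh B M h (Qn n) l k)). intros; apply (cv_trQhh B M G); auto. Qed.

Lemma cv_log2 u l : Un_cv u l -> 0 < l -> Un_cv (fun n => log2 (u n)) (log2 l).
Proof. intros. unfold log2, Rdiv. apply cv_scal. apply cv_ln; auto. Qed.

Lemma cv_rate B M G grp serv P h Qn Qs k : ECv (M * B) G Qn Qs -> Qfeas B M G serv P Qs ->
  (grp k < G)%nat ->
  Un_cv (fun n => rate B M G grp h (Qn n) k) (rate B M G grp h Qs k).
Proof. intros H HQ Hg. unfold rate.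
 pose proof (trQhh_nonneg B M G serv P h Qs (grp k) k HQ Hg).
 pose proof (interf_nonneg B M G grp serv P h Qs k HQ).
 apply cv_log2. apply CV_plus. apply cv_const. apply cv_div. apply (cv_trQhh B M G); auto.
 apply CV_plus. apply cv_interf; auto. apply cv_const. lra.
 assert (0 <= trQhh B M h Qs (grp k) k / (interf B M G grp h Qs k + 1)).
 { unfold Rdiv; apply Rmult_le_pos; auto. left; apply Rinv_0_lt_compat; lra. } lra. Qed.

Lemma cv_Fobj B M K G grp serv P h tau delta Qn Qs sn ss
  (Hgrp : forall k, (k < K)%nat -> (grp k < G)%nat) :
  ECv (M * B) G Qn Qs -> Qfeas B M G serv P Qs ->
  (forall k, (k < K)%nat -> Un_cv (fun n => sn n k) (ss k)) ->
  Un_cv (fun n => Fobj B M K G grp h tau delta (Qn n) (sn n)) (Fobj B M K G grp h tau delta Qs ss).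
Proof. intros H HQ Hs. unfold Fobj.
 apply (cv_lmin (fun n g => lsum (sn n) (members K grp g) / (tau g * INR (length (members K grp g))) *
    lmin (fun k => rate B M G grp h (Qn n) k + / delta * (1 - sn n k)) (members K grp g))).
 intros g Hg. apply CV_mult. unfold Rdiv. apply cv_scal.
 apply (cv_lsum (fun n k => sn n k)). intros k Hk; apply members_In in Hk; apply Hs; tauto.
 apply (cv_lmin (fun n k => rate B M G grp h (Qn n) k + / delta * (1 - sn n k))).
 intros k Hk; apply members_In in Hk. apply CV_plus. eapply cv_rate; eauto. apply Hgrp; tauto.
 apply CV_mult. apply cv_const. apply CV_minus. apply cv_const. apply Hs; tauto. Qed.

Lemma cv_Ftil B M K G grp serv P h tau delta Qn Qs Q s :
  ECv (M * B) G Qn Qs -> Qfeas B M G serv P Qs ->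
  Un_cv (fun n => Ftil B M K G grp h tau delta (Qn n) Q s) (Ftil B M K G grp h tau delta Qs Q s).
Proof. intros H HQ. unfold Ftil.
 apply (cv_lmin (fun n g => lsum s (members K grp g) / (tau g * INR (length (members K grp g))) *
    lmin (fun k => rbar B M G grp h Q (Qn n) k + / delta * (1 - s k)) (members K grp g))).
 intros g Hg. apply CV_mult. apply cv_const.
 apply (cv_lmin (fun n k => rbar B M G grp h Q (Qn n) k + / delta * (1 - s k))).
 intros k Hk. apply CV_plus. 2: apply cv_const.
 rewrite rbar_eq. apply (cv_ext (fun n => log2 (1 + sumR G (fun l : nat => trQhh B M h Q l k)) -
     log2 (1 + interf B M G grp h (Qn n) k) -
     (interf B M G grp h Q k - interf B M G grp h (Qn n) k) /
     ((1 + interf B M G grp h (Qn n) k) * ln 2))).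
 intros; rewrite rbar_eq; auto.
 pose proof (interf_nonneg B M G grp serv P h Qs k HQ). pose proof ln2_pos.
 apply CV_minus. apply CV_minus. apply cv_const. apply cv_log2. apply CV_plus. apply cv_const.
 apply cv_interf; auto. lra. apply cv_div. apply CV_minus. apply cv_const. apply cv_interf; auto.
 apply cv_scal. apply CV_plus. apply cv_const. apply cv_interf; auto.
 apply Rgt_not_eq. apply Rmult_lt_0_compat; lra. Qed.

Lemma cv_unique_ext u v l m : Un_cv u l -> Un_cv v m -> (forall n, u n = v n) -> l = m.
Proof. intros. apply (UL_sequence u). auto. apply (cv_ext v); auto. Qed.

Lemma Qfeas_closed B M G serv P Qn Qs : (forall n, Qfeas B M G serv P (Qn n)) ->
  ECv (M * B) G Qn Qs -> Qfeas B M G serv P Qs.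
Proof. intros HF H. split; [|split].
 - intros g Hg. split.
   + intros i j Hi Hj. destruct (H g i j Hg Hi Hj) as [H1 H2]. destruct (H g j i Hg Hj Hi) as [H3 H4].
     destruct (Qs g i j) as [a b] eqn:E1. destruct (Qs g j i) as [c d] eqn:E2. unfold Cconj. simpl in *.
     f_equal.
     * apply (cv_unique_ext _ _ _ _ H1 H3). intros n. destruct (HF n) as [Hp _].
       destruct (Hp g Hg) as [Hh _]. rewrite (Hh i j Hi Hj). auto.
     * apply (cv_unique_ext _ _ _ _ H2 (CV_opp _ _ H4)). intros n. destruct (HF n) as [Hp _].
       destruct (Hp g Hg) as [Hh _]. rewrite (Hh i j Hi Hj). unfold opp_seq. auto.
   + intros v. apply (cv_ge (fun n => fst (quad (M * B) (Qn n g) v))).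
     apply (cv_quad _ (fun n => Qn n g)). intros; apply H; auto.
     intros n. destruct (HF n) as [Hp _]. apply (Hp g Hg).
 - intros b Hb. apply (cv_le (fun n => sumR G (fun g => blocktr M (Qn n g) b))).
   apply (cv_sumR G (fun n g => blocktr M (Qn n g) b)). intros g Hg. unfold blocktr.
   apply (cv_sumR M (fun n m => fst (Qn n g (b * M + m)%nat (b * M + m)%nat))).
   intros m Hm. apply H; auto; nia.
   intros n. destruct (HF n) as [_ [Hp _]]. auto.
 - intros g i j Hg Hi Hj Hs. destruct (H g i j Hg Hi Hj) as [H1 H2].
   destruct (Qs g i j) as [a b] eqn:E. simpl in *. unfold C0. f_equal.
   + apply (cv_eqc _ _ _ H1). intros n. destruct (HF n) as [_ [_ Hz]]. rewrite (Hz g i j); auto.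
   + apply (cv_eqc _ _ _ H2). intros n. destruct (HF n) as [_ [_ Hz]]. rewrite (Hz g i j); auto.
Qed.

Lemma abs_le_elim x e : Rabs x <= e -> - e <= x <= e.
Proof. intros H. pose proof (Rle_abs x). pose proof (Rle_abs (-x)). rewrite Rabs_Ropp in H1. lra. Qed.

Lemma Rmin_lip x y u v e : Rabs (x - u) <= e -> Rabs (y - v) <= e -> Rabs (Rmin x y - Rmin u v) <= e.
Proof. intros H1 H2. apply abs_le_elim in H1. apply abs_le_elim in H2. apply Rabs_le.
 unfold Rmin. destruct (Rle_dec x y); destruct (Rle_dec u v); lra. Qed.

Definition RDv (f : R -> R) (f0 a : R) := forall eps, 0 < eps -> exists eta, 0 < eta /\
  forall t, 0 < t < eta -> Rabs (f t - f0 - a * t) <= eps * t.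

Definition AP (f g : R -> R) := forall eps, 0 < eps -> exists eta, 0 < eta /\
  forall t, 0 < t < eta -> Rabs (f t - g t) <= eps * t.

Lemma RD_of_deriv f a : derivable_pt_lim f 0 a -> RDv f (f 0) a.
Proof. intros H eps He. destruct (H eps He) as [d Hd]. exists d. split. apply cond_pos.
 intros t Ht. assert (t <> 0) by lra. specialize (Hd t H0). rewrite Rabs_right in Hd by lra.
 specialize (Hd (proj2 Ht)). rewrite Rplus_0_l in Hd.
 replace (f t - f 0 - a * t) with (t * ((f t - f 0) / t - a)) by (field; auto).
 rewrite Rabs_mult, (Rabs_right t) by lra. rewrite (Rmult_comm eps). apply Rmult_le_compat_l; lra. Qed.

Lemma RD_AP f g g0 a : RDv g g0 a -> AP f g -> RDv f g0 a.
Proof. intros H1 H2 eps He. destruct (H1 (eps/2)) as [e1 [He1 H1']]. lra.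
 destruct (H2 (eps/2)) as [e2 [He2 H2']]. lra. exists (Rmin e1 e2). split.
 apply Rmin_glb_lt; auto. intros t Ht. assert (t < e1) by (eapply Rlt_le_trans; [apply Ht|apply Rmin_l]).
 assert (t < e2) by (eapply Rlt_le_trans; [apply Ht|apply Rmin_r]).
 specialize (H1' t (conj (proj1 Ht) H)). specialize (H2' t (conj (proj1 Ht) H0)).
 replace (f t - g0 - a * t) with ((f t - g t) + (g t - g0 - a * t)) by ring.
 eapply Rle_trans. apply Rabs_triang. lra. Qed.

Lemma RD_loc f g f0 a : RDv g f0 a -> (exists t0, 0 < t0 /\ forall t, 0 < t < t0 -> f t = g t) ->
  RDv f f0 a.
Proof. intros H [t0 [Ht0 Hfg]] eps He. destruct (H eps He) as [e [He' Hh]].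
 exists (Rmin e t0). split. apply Rmin_glb_lt; auto. intros t Ht.
 assert (t < e) by (eapply Rlt_le_trans; [apply Ht|apply Rmin_l]).
 assert (t < t0) by (eapply Rlt_le_trans; [apply Ht|apply Rmin_r]).
 rewrite Hfg by lra. apply Hh; lra. Qed.

Lemma AP_loc f g f' g' : AP f g -> (exists t0, 0 < t0 /\ forall t, 0 < t < t0 -> f' t = f t /\ g' t = g t) ->
  AP f' g'.
Proof. intros H [t0 [Ht0 Hfg]] eps He. destruct (H eps He) as [e [He' Hh]].
 exists (Rmin e t0). split. apply Rmin_glb_lt; auto. intros t Ht.
 assert (t < e) by (eapply Rlt_le_trans; [apply Ht|apply Rmin_l]).
 assert (t < t0) by (eapply Rlt_le_trans; [apply Ht|apply Rmin_r]).
 destruct (Hfg t) as [-> ->]. lra. apply Hh; lra. Qed.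

Lemma RD_const c : RDv (fun _ => c) c 0.
Proof. intros eps He. exists 1. split. lra. intros. replace (c - c - 0 * t) with 0 by ring.
 rewrite Rabs_R0. nra. Qed.

Lemma RD_bound f f0 a : RDv f f0 a -> exists eta, 0 < eta /\
  forall t, 0 < t < eta -> f0 + a * t - t <= f t <= f0 + a * t + t.
Proof. intros H. destruct (H 1) as [e [He Hh]]. lra. exists e. split; auto. intros t Ht.
 specialize (Hh t Ht). apply abs_le_elim in Hh. lra. Qed.

Lemma RD_min_lt f g f0 g0 a b : RDv f f0 a -> RDv g g0 b -> f0 < g0 ->
  RDv (fun t => Rmin (f t) (g t)) (Rmin f0 g0) a.
Proof. intros Hf Hg Hlt. destruct (RD_bound _ _ _ Hf) as [e1 [He1 B1]].
 destruct (RD_bound _ _ _ Hg) as [e2 [He2 B2]].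
 set (e3 := (g0 - f0) / (Rabs a + Rabs b + 2)).
 assert (He3 : 0 < e3). { unfold e3. apply Rdiv_lt_0_compat. lra. pose proof (Rabs_pos a); pose proof (Rabs_pos b); lra. }
 apply RD_loc with f.
 - rewrite Rmin_left by lra. auto.
 - exists (Rmin e1 (Rmin e2 e3)). split. repeat apply Rmin_glb_lt; auto.
   intros t Ht. assert (t < e1) by (eapply Rlt_le_trans; [apply Ht|apply Rmin_l]).
   assert (t < Rmin e2 e3) by (eapply Rlt_le_trans; [apply Ht|apply Rmin_r]).
   assert (t < e2) by (eapply Rlt_le_trans; [apply H0|apply Rmin_l]).
   assert (t < e3) by (eapply Rlt_le_trans; [apply H0|apply Rmin_r]).
   specialize (B1 t (conj (proj1 Ht) H)). specialize (B2 t (conj (proj1 Ht) H1)).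
   apply Rmin_left.
   assert (t * (Rabs a + Rabs b + 2) < g0 - f0).
   { unfold e3 in H2. apply (Rmult_lt_compat_r (Rabs a + Rabs b + 2)) in H2.
     unfold Rdiv in H2. rewrite Rmult_assoc, Rinv_l, Rmult_1_r in H2. auto.
     pose proof (Rabs_pos a); pose proof (Rabs_pos b); lra.
     pose proof (Rabs_pos a); pose proof (Rabs_pos b); lra. }
   assert (a * t <= Rabs a * t) by (apply Rmult_le_compat_r; [lra| apply Rle_abs]).
   assert (- b * t <= Rabs b * t). { apply Rmult_le_compat_r. lra. rewrite <- Rabs_Ropp. apply Rle_abs. }
   nra. Qed.

Lemma RD_min f g f0 g0 a b : RDv f f0 a -> RDv g g0 b ->
  exists c, RDv (fun t => Rmin (f t) (g t)) (Rmin f0 g0) c.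
Proof. intros Hf Hg. destruct (Rtotal_order f0 g0) as [Hlt|[Heq|Hgt]].
 - exists a. eapply RD_min_lt; eauto.
 - subst. exists (Rmin a b). intros eps He. destruct (Hf eps He) as [e1 [He1 H1]].
   destruct (Hg eps He) as [e2 [He2 H2]]. exists (Rmin e1 e2). split. apply Rmin_glb_lt; auto.
   intros t Ht. assert (t < e1) by (eapply Rlt_le_trans; [apply Ht|apply Rmin_l]).
   assert (t < e2) by (eapply Rlt_le_trans; [apply Ht|apply Rmin_r]).
   specialize (H1 t (conj (proj1 Ht) H)). specialize (H2 t (conj (proj1 Ht) H0)).
   assert (Rmin g0 g0 + Rmin a b * t = Rmin (g0 + a * t) (g0 + b * t)).
   { rewrite Rmin_left by lra. unfold Rmin. destruct (Rle_dec a b); destruct (Rle_dec (g0 + a*t) (g0 + b*t)); nra. }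
   replace (Rmin (f t) (g t) - Rmin g0 g0 - Rmin a b * t) with
     (Rmin (f t) (g t) - (Rmin g0 g0 + Rmin a b * t)) by ring. rewrite H3.
   apply Rmin_lip; [replace (f t - (g0 + a*t)) with (f t - g0 - a*t) by ring |
                    replace (g t - (g0 + b*t)) with (g t - g0 - b*t) by ring]; auto.
 - exists b. rewrite Rmin_comm. apply (RD_loc _ (fun t => Rmin (g t) (f t))).
   eapply RD_min_lt; eauto. exists 1. split. lra. intros. apply Rmin_comm. Qed.

Lemma RD_affmul g g0 b c d : RDv g g0 b ->
  RDv (fun t => (c + t * d) * g t) (c * g0) (d * g0 + c * b).
Proof. intros Hg eps He. set (K := Rabs c + Rabs d * (1 + Rabs b) + 1).
 assert (HK : 0 < K) by (unfold K; pose proof (Rabs_pos c); pose proof (Rabs_pos d); pose proof (Rabs_pos b); nra).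
 set (e := Rmin 1 (eps / (2 * K))). assert (He0 : 0 < e).
 { unfold e. apply Rmin_glb_lt. lra. apply Rdiv_lt_0_compat; lra. }
 destruct (Hg e He0) as [e1 [He1 H1]]. exists (Rmin e1 e). split. apply Rmin_glb_lt; auto.
 intros t Ht. assert (t < e1) by (eapply Rlt_le_trans; [apply Ht|apply Rmin_l]).
 assert (t < e) by (eapply Rlt_le_trans; [apply Ht|apply Rmin_r]).
 specialize (H1 t (conj (proj1 Ht) H)). set (r := g t - g0 - b * t) in *.
 replace ((c + t * d) * g t - c * g0 - (d * g0 + c * b) * t) with (c * r + t * d * (r + b * t)) by (unfold r; ring).
 assert (e <= 1) by apply Rmin_l. assert (e <= eps / (2 * K)) by apply Rmin_r.
 assert (e * K <= eps / 2). { apply (Rmult_le_compat_r K) in H3; [|lra].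
   replace (eps / (2 * K) * K) with (eps / 2) in H3 by (field; lra). auto. }
 eapply Rle_trans. apply Rabs_triang. rewrite !Rabs_mult. rewrite (Rabs_right t) by lra.
 eapply Rle_trans. apply Rplus_le_compat. apply Rmult_le_compat_l. apply Rabs_pos. apply H1.
 apply Rmult_le_compat_l. apply Rmult_le_pos; [lra|apply Rabs_pos].
 eapply Rle_trans. apply Rabs_triang. rewrite Rabs_mult, (Rabs_right t) by lra.
 apply Rplus_le_compat_r. apply H1.
 pose proof (Rabs_pos c); pose proof (Rabs_pos d); pose proof (Rabs_pos b).
 assert (Rabs c * (e * t) + t * Rabs d * (e * t + Rabs b * t) <= t * (e * K)).
 { unfold K. assert (t <= 1) by lra.
   assert (t * Rabs d * (e * t) <= t * Rabs d * e).
   { apply Rmult_le_compat_l. apply Rmult_le_pos; lra. assert (0 <= e) by lra. nra. }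
   assert (t * Rabs d * (Rabs b * t) <= t * Rabs d * (Rabs b * e)).
   { apply Rmult_le_compat_l. apply Rmult_le_pos; lra. apply Rmult_le_compat_l; lra. }
   nra. }
 assert (t * (e * K) <= t * (eps / 2)) by (apply Rmult_le_compat_l; lra).
 assert (t * (eps / 2) <= eps * t) by nra. lra. Qed.

Lemma RD_lmin (F : R -> nat -> R) (F0 : nat -> R) l :
  (forall x, In x l -> exists a, RDv (fun t => F t x) (F0 x) a) ->
  exists c, RDv (fun t => lmin (F t) l) (lmin F0 l) c.
Proof. induction l as [|x l IH]; simpl; intros H. exists 0. apply RD_const.
 destruct l. apply H; auto. destruct (H x (or_introl eq_refl)) as [a Ha].
 destruct IH as [b Hb]. intros; apply H; auto.
 exact (RD_min (fun t => F t x) (fun t => lmin (F t) (n :: l)) _ _ a b Ha Hb). Qed.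

Lemma AP_min f1 g1 f2 g2 : AP f1 g1 -> AP f2 g2 ->
  AP (fun t => Rmin (f1 t) (f2 t)) (fun t => Rmin (g1 t) (g2 t)).
Proof. intros H1 H2 eps He. destruct (H1 eps He) as [e1 [He1 A1]].
 destruct (H2 eps He) as [e2 [He2 A2]]. exists (Rmin e1 e2). split. apply Rmin_glb_lt; auto.
 intros t Ht. assert (t < e1) by (eapply Rlt_le_trans; [apply Ht|apply Rmin_l]).
 assert (t < e2) by (eapply Rlt_le_trans; [apply Ht|apply Rmin_r]).
 apply Rmin_lip; [apply A1|apply A2]; lra. Qed.

Lemma AP_lmin (F Gf : R -> nat -> R) l :
  (forall x, In x l -> AP (fun t => F t x) (fun t => Gf t x)) ->
  AP (fun t => lmin (F t) l) (fun t => lmin (Gf t) l).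
Proof. induction l as [|x l IH]; simpl; intros H.
 intros eps He. exists 1. split. lra. intros. rewrite Rminus_diag, Rabs_R0. nra.
 destruct l. apply H; auto.
 apply (AP_min (fun t => F t x) (fun t => Gf t x) (fun t => lmin (F t) (n :: l))
        (fun t => lmin (Gf t) (n :: l))). apply H; auto. apply IH. intros; apply H; auto. Qed.

Lemma AP_affmul f g c d : AP f g -> AP (fun t => (c + t * d) * f t) (fun t => (c + t * d) * g t).
Proof. intros H eps He. set (K := Rabs c + Rabs d + 1).
 assert (HK : 0 < K) by (unfold K; pose proof (Rabs_pos c); pose proof (Rabs_pos d); lra).
 destruct (H (eps / K)) as [e [He' A]]. apply Rdiv_lt_0_compat; lra.
 exists (Rmin e 1). split. apply Rmin_glb_lt; lra. intros t Ht.
 assert (t < e) by (eapply Rlt_le_trans; [apply Ht|apply Rmin_l]).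
 assert (t < 1) by (eapply Rlt_le_trans; [apply Ht|apply Rmin_r]).
 specialize (A t (conj (proj1 Ht) H0)).
 replace ((c + t * d) * f t - (c + t * d) * g t) with ((c + t * d) * (f t - g t)) by ring.
 rewrite Rabs_mult. assert (Rabs (c + t * d) <= K).
 { eapply Rle_trans. apply Rabs_triang. rewrite Rabs_mult, (Rabs_right t) by lra. unfold K.
   pose proof (Rabs_pos d). nra. }
 assert (Rabs (c + t * d) * Rabs (f t - g t) <= K * (eps / K * t)).
 { apply Rmult_le_compat; auto; apply Rabs_pos. }
 replace (K * (eps / K * t)) with (eps * t) in H3 by (field; lra). auto. Qed.

Lemma AP_plus f1 g1 f2 g2 : AP f1 g1 -> AP f2 g2 ->
  AP (fun t => f1 t + f2 t) (fun t => g1 t + g2 t).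
Proof. intros H1 H2 eps He. destruct (H1 (eps/2)) as [e1 [He1 A1]]. lra.
 destruct (H2 (eps/2)) as [e2 [He2 A2]]. lra. exists (Rmin e1 e2). split. apply Rmin_glb_lt; auto.
 intros t Ht. assert (t < e1) by (eapply Rlt_le_trans; [apply Ht|apply Rmin_l]).
 assert (t < e2) by (eapply Rlt_le_trans; [apply Ht|apply Rmin_r]).
 specialize (A1 t (conj (proj1 Ht) H)). specialize (A2 t (conj (proj1 Ht) H0)).
 replace (f1 t + f2 t - (g1 t + g2 t)) with ((f1 t - g1 t) + (f2 t - g2 t)) by ring.
 eapply Rle_trans. apply Rabs_triang. lra. Qed.

Lemma AP_refl f : AP f f.
Proof. intros eps He. exists 1. split. lra. intros. rewrite Rminus_diag, Rabs_R0. nra. Qed.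

Lemma AP_opp f g : AP f g -> AP (fun t => - f t) (fun t => - g t).
Proof. intros H eps He. destruct (H eps He) as [e [He' A]]. exists e. split; auto.
 intros. replace (- f t - - g t) with (- (f t - g t)) by ring. rewrite Rabs_Ropp. auto. Qed.

Lemma AP_of_RD f g f0 a : RDv f f0 a -> RDv g f0 a -> AP f g.
Proof. intros H1 H2 eps He. destruct (H1 (eps/2)) as [e1 [He1 A1]]. lra.
 destruct (H2 (eps/2)) as [e2 [He2 A2]]. lra. exists (Rmin e1 e2). split. apply Rmin_glb_lt; auto.
 intros t Ht. assert (t < e1) by (eapply Rlt_le_trans; [apply Ht|apply Rmin_l]).
 assert (t < e2) by (eapply Rlt_le_trans; [apply Ht|apply Rmin_r]).
 specialize (A1 t (conj (proj1 Ht) H)). specialize (A2 t (conj (proj1 Ht) H0)).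
 replace (f t - g t) with ((f t - f0 - a * t) - (g t - f0 - a * t)) by ring.
 eapply Rle_trans. apply Rabs_triang. rewrite Rabs_Ropp. lra. Qed.

Lemma RD_affine c d : RDv (fun t => c + t * d) c d.
Proof. intros eps He. exists 1. split. lra. intros. replace (c + t * d - c - d * t) with 0 by ring.
 rewrite Rabs_R0. nra. Qed.

Lemma RD_plus f g f0 g0 a b : RDv f f0 a -> RDv g g0 b -> RDv (fun t => f t + g t) (f0 + g0) (a + b).
Proof. intros H1 H2 eps He. destruct (H1 (eps/2)) as [e1 [He1 A1]]. lra.
 destruct (H2 (eps/2)) as [e2 [He2 A2]]. lra. exists (Rmin e1 e2). split. apply Rmin_glb_lt; auto.
 intros t Ht. assert (t < e1) by (eapply Rlt_le_trans; [apply Ht|apply Rmin_l]).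
 assert (t < e2) by (eapply Rlt_le_trans; [apply Ht|apply Rmin_r]).
 specialize (A1 t (conj (proj1 Ht) H)). specialize (A2 t (conj (proj1 Ht) H0)).
 replace (f t + g t - (f0 + g0) - (a + b) * t) with ((f t - f0 - a * t) + (g t - g0 - b * t)) by ring.
 eapply Rle_trans. apply Rabs_triang. lra. Qed.

Lemma deriv_ext f g x l : (forall t, f t = g t) -> derivable_pt_lim g x l -> derivable_pt_lim f x l.
Proof. intros E H eps He. destruct (H eps He) as [d Hd]. exists d. intros. rewrite !E. auto. Qed.

Lemma deriv_aff a b : derivable_pt_lim (fun t => a + t * b) 0 b.
Proof. intros eps He. exists (mkposreal 1 Rlt_0_1). intros. 
 replace ((a + (0 + h) * b - (a + 0 * b)) / h - b) with 0 by (field; auto). rewrite Rabs_R0; auto. Qed.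

Lemma deriv_log2_aff p q : 0 < p -> derivable_pt_lim (fun t => log2 (p + t * q)) 0 (q / p / ln 2).
Proof. intros Hp. pose proof ln2_pos.
 apply (deriv_ext _ (mult_real_fct (/ ln 2) (comp ln (fun t => p + t * q)))).
 intros t. unfold mult_real_fct, comp, log2, Rdiv. ring.
 replace (q / p / ln 2) with (/ ln 2 * (/ (p + 0 * q) * q)) by (field; lra).
 apply derivable_pt_lim_scal. apply derivable_pt_lim_comp. apply deriv_aff.
 apply derivable_pt_lim_ln. lra. Qed.

Lemma deriv_log2_plus_aff p q a b : 0 < p ->
  exists l, derivable_pt_lim (fun t => log2 (p + t * q) + (a + t * b)) 0 l.
Proof. intros Hp. eexists. apply (derivable_pt_lim_plus (fun t => log2 (p + t * q)) (fun t => a + t * b)).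
 apply deriv_log2_aff; auto. apply deriv_aff. Qed.

Lemma RD_base f x y a : RDv f x a -> x = y -> RDv f y a.
Proof. intros; subst; auto. Qed.

Lemma pieceT_RD B M G grp serv P h delta Qs D s ds k : Qfeas B M G serv P Qs ->
  exists a, RDv (fun t => rbar B M G grp h (Qstep Qs D t) Qs k + / delta * (1 - sstep s ds t k))
               (rbar B M G grp h Qs Qs k + / delta * (1 - s k)) a.
Proof. intros HQ.
 set (S0 := sumR G (fun l => trQhh B M h Qs l k)). set (S1 := sumR G (fun l => trQhh B M h D l k)).
 set (I0 := interf B M G grp h Qs k). set (I1 := interf B M G grp h D k).
 assert (HS0 : 0 <= S0). { apply sumR_nonneg. intros; eapply trQhh_nonneg; eauto. }
 assert (HI0 : 0 <= I0). { eapply interf_nonneg; eauto. }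
 destruct (deriv_log2_plus_aff (1 + S0) S1 (- log2 (1 + I0) + / delta * (1 - s k))
    (- (I1 / ((1 + I0) * ln 2)) - / delta * ds k)) as [l Hl]. lra.
 exists l. apply RD_of_deriv in Hl. eapply RD_loc. eapply RD_base. apply Hl.
 - cbv beta. rewrite Rmult_0_l, Rplus_0_r. rewrite rbar_eq. fold S0 I0. replace (I0 - I0) with 0 by lra. unfold Rdiv. lra.
 - exists 1. split. lra. intros t Ht. rewrite rbar_eq. rewrite sumtr_step, interf_step. fold S0 S1 I0 I1.
   unfold sstep. replace (1 + (S0 + t * S1)) with (1 + S0 + t * S1) by ring. unfold Rdiv. ring. Qed.

Lemma piece_AP B M G grp serv P h delta Qs D s ds k : Qfeas B M G serv P Qs -> (grp k < G)%nat ->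
  (exists t0, 0 < t0 /\ forall t, 0 < t < t0 -> Qfeas B M G serv P (Qstep Qs D t)) ->
  AP (fun t => rate B M G grp h (Qstep Qs D t) k + / delta * (1 - sstep s ds t k))
     (fun t => rbar B M G grp h (Qstep Qs D t) Qs k + / delta * (1 - sstep s ds t k)).
Proof. intros HQ Hg [t0 [Ht0 Hf]].
 set (S0 := sumR G (fun l => trQhh B M h Qs l k)). set (S1 := sumR G (fun l => trQhh B M h D l k)).
 set (I0 := interf B M G grp h Qs k). set (I1 := interf B M G grp h D k).
 assert (HI0 : 0 <= I0). { eapply interf_nonneg; eauto. }
 pose proof ln2_pos.
 set (Lf := fun t => log2 (1 + (S0 + t * S1))).
 set (X := fun t => log2 (1 + I0 + t * I1)).
 set (Y := fun t => log2 (1 + I0) + t * (I1 / (1 + I0) / ln 2)).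
 set (Z := fun t => / delta * (1 - sstep s ds t k)).
 assert (AXY : AP X Y).
 { apply (AP_of_RD X Y (log2 (1 + I0)) (I1 / (1 + I0) / ln 2)).
   - eapply RD_base. apply RD_of_deriv. apply deriv_log2_aff. lra. unfold X. rewrite Rmult_0_l, Rplus_0_r. auto.
   - apply RD_affine. }
 assert (A2 : AP (fun t => (Lf t + - X t) + Z t) (fun t => (Lf t + - Y t) + Z t)).
 { apply (AP_plus (fun t => Lf t + - X t) (fun t => Lf t + - Y t) Z Z).
   apply (AP_plus Lf Lf (fun t => - X t) (fun t => - Y t)). apply AP_refl. apply AP_opp; auto. apply AP_refl. }
 apply (AP_loc _ _ _ _ A2). exists t0. split; auto. intros t Ht. specialize (Hf t Ht). split.
 - unfold Z, Lf, X. rewrite rate_eq; auto. rewrite sumtr_step, interf_step. fold S0 S1 I0 I1.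
   replace (1 + (I0 + t * I1)) with (1 + I0 + t * I1) by ring. ring.
   eapply trQhh_nonneg; eauto. eapply interf_nonneg; eauto.
 - unfold Z, Lf, Y. rewrite rbar_eq. rewrite sumtr_step, interf_step. fold S0 S1 I0 I1.
   replace ((I0 + t * I1 - I0) / ((1 + I0) * ln 2)) with (t * (I1 / (1 + I0) / ln 2)) by (field; lra). lra. Qed.

Lemma lsum_div_step s ds t l c : lsum (sstep s ds t) l / c = lsum s l / c + t * (lsum ds l / c).
Proof. rewrite lsum_sstep. unfold Rdiv. ring. Qed.

Lemma FT_RD B M K G grp serv P h tau delta Qs D s ds : Qfeas B M G serv P Qs ->
  exists L, RDv (fun t => Ftil B M K G grp h tau delta Qs (Qstep Qs D t) (sstep s ds t))
                (Ftil B M K G grp h tau delta Qs Qs s) L.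
Proof. intros HQ. unfold Ftil.
 apply (RD_lmin (fun t g => lsum (sstep s ds t) (members K grp g) / (tau g * INR (length (members K grp g))) *
     lmin (fun k => rbar B M G grp h (Qstep Qs D t) Qs k + / delta * (1 - sstep s ds t k)) (members K grp g))).
 intros g Hg.
 set (c := tau g * INR (length (members K grp g))).
 destruct (RD_lmin (fun t k => rbar B M G grp h (Qstep Qs D t) Qs k + / delta * (1 - sstep s ds t k))
    (fun k => rbar B M G grp h Qs Qs k + / delta * (1 - s k)) (members K grp g)) as [b Hb].
 { intros k Hk. eapply pieceT_RD; eauto. }
 eexists. eapply RD_loc. apply (RD_affmul _ _ _ (lsum s (members K grp g) / c) (lsum ds (members K grp g) / c) Hb).
 exists 1. split. lra. intros t Ht. rewrite lsum_div_step. auto. Qed.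

Lemma F_AP B M K G grp serv P h tau delta Qs D s ds
  (Hgrp : forall k, (k < K)%nat -> (grp k < G)%nat) : Qfeas B M G serv P Qs ->
  (exists t0, 0 < t0 /\ forall t, 0 < t < t0 -> Qfeas B M G serv P (Qstep Qs D t)) ->
  AP (fun t => Fobj B M K G grp h tau delta (Qstep Qs D t) (sstep s ds t))
     (fun t => Ftil B M K G grp h tau delta Qs (Qstep Qs D t) (sstep s ds t)).
Proof. intros HQ Hd. unfold Ftil, Fobj.
 apply (AP_lmin (fun t g => lsum (sstep s ds t) (members K grp g) / (tau g * INR (length (members K grp g))) *
     lmin (fun k => rate B M G grp h (Qstep Qs D t) k + / delta * (1 - sstep s ds t k)) (members K grp g))
   (fun t g => lsum (sstep s ds t) (members K grp g) / (tau g * INR (length (members K grp g))) *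
     lmin (fun k => rbar B M G grp h (Qstep Qs D t) Qs k + / delta * (1 - sstep s ds t k)) (members K grp g))).
 intros g Hg. set (c := tau g * INR (length (members K grp g))).
 assert (A := AP_affmul _ _ (lsum s (members K grp g) / c) (lsum ds (members K grp g) / c)
   (AP_lmin (fun t k => rate B M G grp h (Qstep Qs D t) k + / delta * (1 - sstep s ds t k))
            (fun t k => rbar B M G grp h (Qstep Qs D t) Qs k + / delta * (1 - sstep s ds t k))
            (members K grp g)
            (fun k Hk => piece_AP B M G grp serv P h delta Qs D s ds k HQ
                            (Hgrp k (proj1 (proj1 (members_In K grp g k) Hk))) Hd))).
 apply (AP_loc _ _ _ _ A). exists 1. split. lra. intros t Ht. rewrite !lsum_div_step. auto. Qed.

Lemma dir_main B M K G grp serv P h tau delta Qs s D ds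
  (Hgrp : forall k, (k < K)%nat -> (grp k < G)%nat) :
  Rfeas B M K G serv P Qs s ->
  (forall Q s', Rfeas B M K G serv P Q s' ->
     Ftil B M K G grp h tau delta Qs Q s' <= Fobj B M K G grp h tau delta Qs s) ->
  (exists t0, 0 < t0 /\ forall t, 0 < t <= t0 -> Rfeas B M K G serv P (Qstep Qs D t) (sstep s ds t)) ->
  exists L, L <= 0 /\
      forall eps, 0 < eps -> exists eta, 0 < eta /\
        forall t, 0 < t < eta ->
          Rabs ((Fobj B M K G grp h tau delta (Qstep Qs D t) (sstep s ds t)
                 - Fobj B M K G grp h tau delta Qs s) / t - L) < eps.
Proof. intros HR Hmax [t0 [Ht0 Hdir]]. pose proof HR as [HQ Hs].
 destruct (FT_RD B M K G grp serv P h tau delta Qs D s ds HQ) as [L HL].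
 rewrite (Ftil_self B M K G grp serv P h tau delta Qs s Hgrp HR) in HL.
 assert (HF : RDv (fun t => Fobj B M K G grp h tau delta (Qstep Qs D t) (sstep s ds t))
                  (Fobj B M K G grp h tau delta Qs s) L).
 { eapply RD_AP. apply HL. eapply F_AP; eauto. exists t0. split; auto. intros. apply Hdir. lra. }
 exists L. split.
 - destruct (Rle_lt_dec L 0); auto. exfalso. destruct (HL (L / 2)) as [e [He H]]. lra.
   set (t := Rmin e t0 / 2). assert (0 < Rmin e t0) by (apply Rmin_glb_lt; auto).
   assert (t < e) by (unfold t; pose proof (Rmin_l e t0); lra).
   assert (t <= t0) by (unfold t; pose proof (Rmin_r e t0); lra).
   assert (0 < t) by (unfold t; lra).
   specialize (H t (conj H3 H1)). apply abs_le_elim in H.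
   specialize (Hmax _ _ (Hdir t (conj H3 H2))). nra.
 - intros eps He. destruct (HF (eps / 2)) as [e [He' H]]. lra. exists e. split; auto.
   intros t Ht. specialize (H t Ht).
   replace ((Fobj B M K G grp h tau delta (Qstep Qs D t) (sstep s ds t) - Fobj B M K G grp h tau delta Qs s) / t - L)
     with ((Fobj B M K G grp h tau delta (Qstep Qs D t) (sstep s ds t) - Fobj B M K G grp h tau delta Qs s - L * t) * / t)
     by (field; lra).
   rewrite Rabs_mult, (Rabs_right (/ t)) by (left; apply Rinv_0_lt_compat; lra).
   apply (Rmult_le_compat_r (/ t)) in H. 2: left; apply Rinv_0_lt_compat; lra.
   replace (eps / 2 * t * / t) with (eps / 2) in H by (field; lra). lra. Qed.

Lemma cv_shift u l n : Un_cv u l -> Un_cv (fun k => u (k + n)%nat) l.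
Proof. intros H e He. destruct (H e He) as [N HN]. exists N. intros. apply HN. lia. Qed.

Lemma phi_ge (phi : nat -> nat) : (forall n, (phi n < phi (S n))%nat) -> forall n, (n <= phi n)%nat.
Proof. intros H n. induction n. lia. specialize (H n). lia. Qed.

Theorem proposition1
  (B M K G : nat) (grp : nat -> nat) (serv : nat -> nat -> bool)
  (P : nat -> R) (h : nat -> nat -> Cpx) (tau : nat -> R) (delta : R)
  (Hdelta : 0 < delta)
  (HP : forall b, (b < B)%nat -> 0 <= P b)
  (Htau : forall g, (g < G)%nat -> 0 < tau g)
  (HG : (0 < G)%nat)
  (Hgrp : forall k, (k < K)%nat -> (grp k < G)%nat)
  (Hnonempty : forall g, (g < G)%nat -> exists k, (k < K)%nat /\ grp k = g)
  (Hserv : forall g b, serv g b = true -> (b < B)%nat)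
  (Qs : nat -> MatTuple) (Rs : nat -> nat -> R) (ss : nat -> nat -> R)
  (als : nat -> R)
  (Hinit : Qfeas B M G serv P (Qs O))
  (Hiter : forall n, subopt B M K G grp serv P h tau delta
                        (Qs n) (Qs (S n)) (Rs (S n)) (ss (S n)) (als (S n)))
  (phi : nat -> nat) (Hphi : forall n, (phi n < phi (S n))%nat)
  (Qstar : MatTuple) (sstar : nat -> R) (Rstar : nat -> R) (alstar : R)
  (HQre : forall g i j, (g < G)%nat -> (i < M * B)%nat -> (j < M * B)%nat ->
     Un_cv (fun n => fst (Qs (phi n) g i j)) (fst (Qstar g i j)))
  (HQim : forall g i j, (g < G)%nat -> (i < M * B)%nat -> (j < M * B)%nat ->
     Un_cv (fun n => snd (Qs (phi n) g i j)) (snd (Qstar g i j)))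
  (Hs : forall k, (k < K)%nat -> Un_cv (fun n => ss (phi n) k) (sstar k))
  (HR : forall g, (g < G)%nat -> Un_cv (fun n => Rs (phi n) g) (Rstar g))
  (Hal : Un_cv (fun n => als (phi n)) alstar) :
  stationaryR B M K G grp serv P h tau delta Qstar sstar.
Proof.
 assert (HRf : forall n, Rfeas B M K G serv P (Qs (S n)) (ss (S n))).
 { intros n. destruct (Hiter n) as [[H1 [H2 _]] _]. split; auto. }
 assert (HQf : forall n, Qfeas B M G serv P (Qs n)).
 { intros [|n]. auto. apply HRf. }
 assert (HEC : ECv (M * B) G (fun n => Qs (phi n)) Qstar).
 { intros g i j Hg Hi Hj. split; auto. }
 assert (HQs : Qfeas B M G serv P Qstar).
 { apply (Qfeas_closed B M G serv P (fun n => Qs (phi n))); auto. }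
 assert (Hphige := phi_ge phi Hphi).
 assert (Hsb : forall k, (k < K)%nat -> 0 <= sstar k <= 1).
 { intros k Hk. pose proof (cv_shift _ _ 1 (Hs k Hk)) as C. simpl in C.
   assert (forall n, 0 <= ss (phi (n + 1)%nat) k <= 1).
   { intros n. destruct (phi (n + 1)%nat) eqn:E. specialize (Hphi n). rewrite Nat.add_1_r in E. lia.
     destruct (HRf n0) as [_ Hb]. apply Hb; auto. }
   split. apply (cv_ge _ _ _ C). intros; apply H.
   apply (cv_le _ _ _ C). intros; apply H. }
 assert (HRs : Rfeas B M K G serv P Qstar sstar) by (split; auto).
 set (Fs := fun n => Fobj B M K G grp h tau delta (Qs n) (ss n)).
 assert (Hup : forall m, als (S m) * als (S m) <= Fs (S m)).
 { intros m. eapply Rle_trans. eapply subfeas_lb; eauto. apply (proj1 (Hiter m)).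
   eapply Ftil_le_F; eauto. }
 assert (Hlo : forall n, Fs (S n) <= als (S (S n)) * als (S (S n))).
 { intros n. unfold Fs. rewrite <- (Ftil_self B M K G grp serv P h tau delta _ _ Hgrp (HRf n)).
   eapply subopt_ub; eauto. }
 assert (Hmono : forall n m, Fs (S n) <= Fs (S (n + m))).
 { intros n m. induction m. rewrite Nat.add_0_r. lra.
   replace (S (n + S m)) with (S (S (n + m))) by lia.
   specialize (Hlo (n + m)%nat). specialize (Hup (S (n + m))). lra. }
 assert (HFcv : Un_cv (fun n => Fs (phi n)) (Fobj B M K G grp h tau delta Qstar sstar)).
 { unfold Fs. eapply (cv_Fobj B M K G grp serv P h tau delta (fun n => Qs (phi n)) Qstar (fun n => ss (phi n))); eauto. }
 assert (HFle : forall n, Fs (S n) <= Fobj B M K G grp h tau delta Qstar sstar).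
 { intros n. pose proof (cv_shift _ _ (S n) HFcv) as C.
   apply (cv_ge _ _ _ C). intros k. simpl.
   assert (S n <= phi (k + S n))%nat by (specialize (Hphige (k + S n)%nat); lia).
   replace (phi (k + S n)%nat) with (S (n + (phi (k + S n) - S n)))%nat by lia. apply Hmono. }
 assert (Hmax : forall Q s', Rfeas B M K G serv P Q s' ->
     Ftil B M K G grp h tau delta Qstar Q s' <= Fobj B M K G grp h tau delta Qstar sstar).
 { intros Q s' Hy. pose proof (cv_Ftil B M K G grp serv P h tau delta _ _ Q s' HEC HQs) as C.
   apply (cv_le _ _ _ C). intros n. eapply Rle_trans. eapply subopt_ub; eauto.
   eapply Rle_trans. apply Hup. apply HFle. }
 split. auto. intros D ds Hd. eapply dir_main; eauto.
Qed.
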